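(* Assume the collections $\mathscr C_{S,i,j}$ satisfy hypotheses (1)–(3) below, and let $\mathscr T\in\mathcal S_{\mathscr C}$. Let $i,j,l\in[5]$ be distinct, $f_1\in\Delta_{(ij)}$ and $f_2\in\Delta_{(il)}$. Then $\mathscr T$ does not have a flip supported on the circuit $X_{ij}^{f_1f_2}=((X_{ij}^{f_1f_2})^+,(X_{ij}^{f_1f_2})^-)$, where $(X_{ij}^{f_1f_2})^+=\{(e_i,f_1),(e_j,f_2)\}$ and $(X_{ij}^{f_1f_2})^-=\{(e_j,f_1),(e_i,f_2)\}$. Hypotheses: for each $S\in\binom{[5]}{4}$ and distinct $i,j\in S$, $\mathscr C_{S,i,j}$ is a collection of zonotopal triangulations $\mathscr T_{i_1i_2i_3}^{f_1f_2f_3}$ with $i_1,i_2,i_3\in S$, such that for each member, with $\{i_4\}=S\setminus\{i_1,i_2,i_3\}$: (1) there exist $f_1'\in\Delta_{(i_1i_4)}$, $f_2'\in\Delta_{(i_2i_4)}$, $f_3'\in\Delta_{(i_3i_4)}$ with $\mathscr T_{i_1i_2i_4}^{f_1f_2'f_1'},\mathscr T_{i_2i_3i_4}^{f_2f_3'f_2'},\mathscr T_{i_3i_1i_4}^{f_3f_1'f_3'}\in\mathscr C_{S,i,j}$; (2) if $i_1=i,i_2=j$, there exist such $f_1',f_2',f_3'$ with $\mathscr T_{i_1i_2i_4}^{f_1f_2'f_1'},\mathscr T_{i_3i_2i_4}^{f_2f_2'f_3'},\mathscr T_{i_1i_3i_4}^{f_3f_3'f_1'}\in\mathscr C_{S,i,j}$;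 and (3) for all distinct $i,j,l\in[5]$ and $f_1\in\Delta_{(ij)}$ there exist $k\in[5]\setminus\{i,j,l\}$, $f_2\in\Delta_{(jk)}$, $f_3\in\Delta_{(ki)}$ with $\mathscr T_{ijk}^{f_1f_2f_3}\in\mathscr C_{[5]\setminus\{l\},i,j}$. $\mathcal S_{\mathscr C}$ is the set of triangulations $\mathscr T$ of $A$ such that (i) every member of every $\mathscr C_{S,i,j}$ is a subset of $\mathscr T$, and (ii) for all $S$, distinct $i,j\in S$, $\mathscr T_{ijk}^{f_1f_2f_3}\in\mathscr C_{S,i,j}$ with $k\in S\setminus\{i,j\}$, $\{l\}=[5]\setminus S$ and $f\in\Delta_{(il)}$, we have $(X_{ijk}^{f_1f_2f_3}\setminus\{(e_i,f_1)\})\cup\{(e_i,f)\}\in\mathscr T$.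
   Context: General conventions. For a finite point set $A\subset\mathbb R^d$: a cell is a subset of $A$; a simplex is an affinely independent cell; a face of a cell $C$ is a subset $F\subseteq C$ which is the set of minimizers on $C$ of some linear functional. A triangulation of $A$ is a collection $\mathscr T$ of simplices of $A$, closed under taking faces, such that for all $\sigma,\sigma'\in\mathscr T$, $\mathrm{conv}(\sigma)\cap\mathrm{conv}(\sigma')=\mathrm{conv}(F)$ for a common face $F$ of $\sigma$ and $\sigma'$, and such that $\bigcup_{\sigma\in\mathscr T}\mathrm{conv}(\sigma)=\mathrm{conv}(A)$. A circuit is a minimal affinely dependent subset $X$; it satisfies an affine dependence $\sum_{x\in X}\lambda_x x=0$, $\sum\lambda_x=0$, all $\lambda_x\neq0$, unique up to scaling, which partitions $X=X^+\cup X^-$ into the points with positive and with negative coefficients; writing $X=(X^+,X^-)$ fixes a choice of sign. Set $\mathscr T_X^+:=\{\sigma\subseteq X:X^+\not\subseteq\sigma\}$ and $\mathscr T_X^-:=\{\sigma\subseteq X:X^-\not\subseteq\sigma\}$. For $C\in\mathscr T$, $\mathrm{link}_{\mathscr T}(C):=\{C'\in\mathscr T: C\cap C'=\emptyset,\ C\cup C'\in\mathscr T\}$. A triangulation $\mathscr T$ of $A$ has a flip supported on the circuit $(X^+,X^-)$, $X\subseteq A$, if $\mathscr T_X^+\subseteq\mathscr T$ and all inclusion-maximal elements of $\mathscr T_X^+$ have the same link $\mathscr L$ in $\mathscr T$. Setting. $\Gamma_5^2$ is the set of unordered pairs $(ij)=(ji)$ of distinct elements of $[5]$. For each $\alpha\in\Gamma_5^2$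 let $\Delta_\alpha$ be a finite set, the sets being pairwise disjoint, and let $\Delta^{n-1}:=\bigcup_\alpha\Delta_\alpha$ be the standard basis of $\mathbb R^n$. Let $e_1,\dots,e_5$ be the standard basis of $\mathbb R^5$ and $A:=\Delta^4\times\Delta^{n-1}=\{(e_i,f):i\in[5],f\in\Delta^{n-1}\}$. For distinct $i_1,\dots,i_t\in[5]$ and distinct $f_1,\dots,f_t\in\Delta^{n-1}$, $X_{i_1\cdots i_t}^{f_1\cdots f_t}$ is the circuit of $A$ with affine dependence $(e_{i_1},f_1)-(e_{i_2},f_1)+(e_{i_2},f_2)-(e_{i_3},f_2)+\dots+(e_{i_t},f_t)-(e_{i_1},f_t)=0$, with $+$ and $-$ parts read off from these signs, and $\mathscr T_{i_1\cdots i_t}^{f_1\cdots f_t}:=\mathscr T^+_{X_{i_1\cdots i_t}^{f_1\cdots f_t}}$. It is called zonotopal if $f_1\in\Delta_{(i_1i_2)},\dots,f_t\in\Delta_{(i_ti_1)}$. *)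

(* Defs.v *)
From HB Require Import structures.
From mathcomp Require Import all_boot all_order all_algebra.
Set Implicit Arguments. Unset Strict Implicit. Unset Printing Implicit Defensive.
Import Order.TTheory GRing.Theory Num.Theory.
Local Open Scope ring_scope.

Section PointConfig.
Variables (R : realFieldType) (T : finType) (d : nat) (pt : T -> 'rV[R]_d).

Definition in_conv (S : {set T}) (x : 'rV[R]_d) : Prop :=
  exists lam : T -> R,
    [/\ forall t, 0 <= lam t,
        forall t, t \notin S -> lam t = 0,
        \sum_t lam t = 1 &
        x = \sum_t lam t *: pt t].

Definition aff_indep (S : {set T}) : Prop :=
  forall lam : T -> R,
    (forall t, t \notin S -> lam t = 0) ->
    \sum_t lam t = 0 ->
    \sum_t lam t *: pt t = 0 ->
    forall t, lam t = 0.

Definition lin_val (c : 'cV[R]_d) (t : T) : R := (pt t *m c) 0 0.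

Definition is_face (F C : {set T}) : Prop :=
  F = set0 \/
  exists c : 'cV[R]_d,
    F = [set x in C | [forall y in C, lin_val c x <= lin_val c y]].

Definition is_triangulation (Tr : {set {set T}}) : Prop :=
  [/\ forall s, s \in Tr -> aff_indep s,
      forall s F, s \in Tr -> is_face F s -> F \in Tr,
      forall s s', s \in Tr -> s' \in Tr ->
        exists F, [/\ is_face F s, is_face F s' &
                      forall x, (in_conv s x /\ in_conv s' x) <-> in_conv F x] &
      forall x, (exists2 s, s \in Tr & in_conv s x) <-> in_conv [set: T] x].

Definition link (Tr : {set {set T}}) (C : {set T}) : {set {set T}} :=
  [set C' in Tr | [disjoint C & C'] && (C :|: C' \in Tr)].

Definition Tplus (Xp Xm : {set T}) : {set {set T}} :=
  [set s : {set T} | (s \subset Xp :|: Xm) && ~~ (Xp \subset s)].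

Definition is_maximal_in (Fam : {set {set T}}) (s : {set T}) : Prop :=
  s \in Fam /\ forall s', s' \in Fam -> s \subset s' -> s' = s.

Definition has_flip (Tr : {set {set T}}) (Xp Xm : {set T}) : Prop :=
  Tplus Xp Xm \subset Tr /\
  forall s1 s2, is_maximal_in (Tplus Xp Xm) s1 -> is_maximal_in (Tplus Xp Xm) s2 ->
    link Tr s1 = link Tr s2.

End PointConfig.

(* ---------- The configuration A = Delta^4 x Delta^{n-1} ----------
   Delta^{n-1} is the finType F (its elements are the standard basis
   vectors of R^n, n = #|F|); lab f is the unordered pair alpha with
   f \in Delta_alpha, represented as a 2-element subset of 'I_5. *)

Definition pointA (R : realFieldType) (F : finType) (p : 'I_5 * F)
  : 'rV[R]_(5 + #|F|) :=
  row_mx (\row_(k < 5) (k == p.1)%:R) (\row_(k < #|F|) (k == enum_rank p.2)%:R).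

Section Setting.
Variables (F : finType) (lab : F -> {set 'I_5}).

Definition inDelta (f : F) (i j : 'I_5) : bool := lab f == [set i; j].

Definition Xplus3 (i1 i2 i3 : 'I_5) (f1 f2 f3 : F) : {set 'I_5 * F} :=
  [set (i1, f1); (i2, f2); (i3, f3)].
Definition Xminus3 (i1 i2 i3 : 'I_5) (f1 f2 f3 : F) : {set 'I_5 * F} :=
  [set (i2, f1); (i3, f2); (i1, f3)].
Definition X3 i1 i2 i3 f1 f2 f3 : {set 'I_5 * F} :=
  Xplus3 i1 i2 i3 f1 f2 f3 :|: Xminus3 i1 i2 i3 f1 f2 f3.
Definition Tcirc3 i1 i2 i3 f1 f2 f3 : {set {set 'I_5 * F}} :=
  Tplus (Xplus3 i1 i2 i3 f1 f2 f3) (Xminus3 i1 i2 i3 f1 f2 f3).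

Definition zonotopal (i1 i2 i3 : 'I_5) (f1 f2 f3 : F) : bool :=
  [&& inDelta f1 i1 i2, inDelta f2 i2 i3 & inDelta f3 i3 i1].

Definition validSij (S : {set 'I_5}) (i j : 'I_5) : bool :=
  [&& #|S| == 4, i \in S, j \in S & i != j].

Variable C : {set 'I_5} -> 'I_5 -> 'I_5 -> {set {set {set 'I_5 * F}}}.

Definition C_members : Prop :=
  forall S i j, validSij S i j -> forall tau, tau \in C S i j ->
    exists i1 i2 i3 f1 f2 f3,
      [/\ [&& i1 \in S, i2 \in S & i3 \in S], uniq [:: i1; i2; i3],
          zonotopal i1 i2 i3 f1 f2 f3 & tau = Tcirc3 i1 i2 i3 f1 f2 f3].

Definition C_hyp1 : Prop :=
  forall S i j, validSij S i j ->
  forall i1 i2 i3 i4 f1 f2 f3,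
    [&& i1 \in S, i2 \in S & i3 \in S] -> uniq [:: i1; i2; i3] ->
    zonotopal i1 i2 i3 f1 f2 f3 -> Tcirc3 i1 i2 i3 f1 f2 f3 \in C S i j ->
    i4 \in S -> i4 \notin [:: i1; i2; i3] ->
    exists f1' f2' f3',
      [/\ [&& inDelta f1' i1 i4, inDelta f2' i2 i4 & inDelta f3' i3 i4],
          Tcirc3 i1 i2 i4 f1 f2' f1' \in C S i j,
          Tcirc3 i2 i3 i4 f2 f3' f2' \in C S i j &
          Tcirc3 i3 i1 i4 f3 f1' f3' \in C S i j].

Definition C_hyp2 : Prop :=
  forall S i j, validSij S i j ->
  forall i1 i2 i3 i4 f1 f2 f3,
    [&& i1 \in S, i2 \in S & i3 \in S] -> uniq [:: i1; i2; i3] ->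
    zonotopal i1 i2 i3 f1 f2 f3 -> Tcirc3 i1 i2 i3 f1 f2 f3 \in C S i j ->
    i4 \in S -> i4 \notin [:: i1; i2; i3] ->
    i1 = i -> i2 = j ->
    exists f1' f2' f3',
      [/\ [&& inDelta f1' i1 i4, inDelta f2' i2 i4 & inDelta f3' i3 i4],
          Tcirc3 i1 i2 i4 f1 f2' f1' \in C S i j,
          Tcirc3 i3 i2 i4 f2 f2' f3' \in C S i j &
          Tcirc3 i1 i3 i4 f3 f3' f1' \in C S i j].

Definition C_hyp3 : Prop :=
  forall i j l : 'I_5, uniq [:: i; j; l] ->
  forall f1, inDelta f1 i j ->
    exists k f2 f3,
      [/\ k \notin [:: i; j; l], inDelta f2 j k, inDelta f3 k i &
          Tcirc3 i j k f1 f2 f3 \in C ([set: 'I_5] :\ l) i j].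

Definition in_SC (R : realFieldType) (Tr : {set {set 'I_5 * F}}) : Prop :=
  [/\ is_triangulation (@pointA R F) Tr,
      forall S i j, validSij S i j -> forall tau, tau \in C S i j -> tau \subset Tr &
      forall S i j, validSij S i j ->
      forall k f1 f2 f3 l f,
        k \in S -> k \notin [:: i; j] ->
        Tcirc3 i j k f1 f2 f3 \in C S i j ->
        l \notin S -> inDelta f i l ->
        (X3 i j k f1 f2 f3 :\ (i, f1)) :|: [set (i, f)] \in Tr].

End Setting.

(* Main.v *)
Require Import Defs.
From HB Require Import structures.
From mathcomp Require Import all_boot all_order all_algebra.
From mathcomp Require Import ring lra.
Set Implicit Arguments. Unset Strict Implicit. Unset Printing Implicit Defensive.
Import Order.TTheory GRing.Theory Num.Theory.
Local Open Scope ring_scope.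

Section Gen.
Variables (R : realFieldType) (T : finType) (d : nat) (pt : T -> 'rV[R]_d).

Lemma aff_unique (S : {set T}) (lam mu : T -> R) :
  aff_indep pt S ->
  (forall t, t \notin S -> lam t = 0) -> (forall t, t \notin S -> mu t = 0) ->
  \sum_t lam t = \sum_t mu t -> \sum_t lam t *: pt t = \sum_t mu t *: pt t ->
  forall t, lam t = mu t.
Proof.
move=> HS Hl Hm Hs Hp t; apply/eqP; rewrite -subr_eq0; apply/eqP.
apply: (HS (fun t => lam t - mu t)) => [x Hx||].
- by rewrite Hl // Hm // subr0.
- by rewrite sumrB Hs subrr.
- under eq_bigr => x _ do rewrite scalerBl.
  by rewrite sumrB Hp subrr.
Qed.

Lemma face_subset (G C : {set T}) : is_face pt G C -> G \subset C.
Proof.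
move=> [->|[c ->]]; first exact: sub0set.
by apply/subsetP => y; rewrite inE => /andP[].
Qed.

Lemma lemK (Tr : {set {set T}}) s s' (lam : T -> R) x t :
  is_triangulation pt Tr -> s \in Tr -> s' \in Tr ->
  (forall t, 0 <= lam t) -> (forall t, t \notin s -> lam t = 0) ->
  \sum_t lam t = 1 -> x = \sum_t lam t *: pt t ->
  in_conv pt s' x -> 0 < lam t -> t \in s'.
Proof.
move=> [Hind _ Hint _] Hs Hs' H0 Hz H1 Hx Hc Ht.
have Hc1 : in_conv pt s x by exists lam.
have [F [HF HF' HFe]] := Hint s s' Hs Hs'.
have [mu [Hmu0 HmuF Hmu1 Hmux]] := (proj1 (HFe x)) (conj Hc1 Hc).
have HFs := face_subset HF; have HFs' := face_subset HF'.
have Hmus : forall t, t \notin s -> mu t = 0.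
  move=> y Hy; apply: HmuF; apply: contra Hy; exact: (subsetP HFs).
have E := aff_unique (Hind s Hs) Hz Hmus (etrans H1 (esym Hmu1)) (etrans (esym Hx) Hmux) t.
apply: (subsetP HFs'); apply/negPn/negP => Hn.
by move: Ht; rewrite E HmuF // ltxx.
Qed.

Variable c1 : 'cV[R]_d.
Hypothesis Hc1 : forall t, lin_val pt c1 t = 1.

Lemma lin_val_sum (c : 'cV[R]_d) (lam : T -> R) :
  ((\sum_t lam t *: pt t) *m c) 0 0 = \sum_t lam t * lin_val pt c t.
Proof.
rewrite mulmx_suml summxE; apply: eq_bigr => t _.
by rewrite -scalemxAl mxE.
Qed.

Lemma face_sub (Tr : {set {set T}}) (s S' : {set T}) :
  is_triangulation pt Tr -> s \in Tr -> S' \subset s -> S' \in Tr.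
Proof.
move=> Htr Hs HS'; have [Hind Hface _ _] := Htr.
have [->|[t0 Ht0]] := set_0Vmem S'.
  by apply: (Hface s) => //; left.
pose M := \matrix_(p < #|s|, q < d) pt (enum_val p) 0 q.
have rowM : forall p, row p M = pt (enum_val p).
  by move=> p; apply/rowP => q; rewrite !mxE.
have Mfree : row_free M.
  apply: inj_row_free => v Hv.
  pose lam t := \sum_(p < #|s|) (enum_val p == t)%:R * v 0 p.
  have Hlamv : \sum_t lam t *: pt t = v *m M.
    rewrite mulmx_sum_row.
    under eq_bigr => t _ do rewrite /lam scaler_suml.
    rewrite exchange_big /=; apply: eq_bigr => p _.
    rewrite (bigD1 (enum_val p)) //= eqxx mul1r rowM big1 ?addr0 // => t /negbTE.
    by rewrite eq_sym => ->; rewrite mul0r scale0r.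
  rewrite Hv in Hlamv.
  have Hlam0 : forall t, t \notin s -> lam t = 0.
    move=> t Ht; apply: big1 => p _.
    have : enum_val p \in s := enum_valP p.
    by case: eqP => [-> /(negP Ht)//|_ _]; rewrite mul0r.
  have Hsum : \sum_t lam t = 0.
    have := lin_val_sum c1 lam; rewrite Hlamv mul0mx mxE.
    by under eq_bigr => t _ do rewrite Hc1 mulr1.
  have Z := Hind s Hs lam Hlam0 Hsum Hlamv.
  apply/rowP => p; rewrite mxE.
  have := Z (enum_val p); rewrite /lam (bigD1 p) //= eqxx mul1r big1 ?addr0 //.
  by move=> p' Hp'; rewrite (inj_eq enum_val_inj) (negbTE Hp') mul0r.
have [B HB] := row_freeP Mfree.
pose y := \col_(p < #|s|) (if enum_val p \in S' then 0 else 1 : R).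
pose c := B *m y.
have Hval : forall t, t \in s -> lin_val pt c t = if t \in S' then 0 else 1.
  move=> t Ht; rewrite -(enum_rankK_in Ht Ht).
  set p := enum_rank_in Ht t.
  have HM : M *m c = y by rewrite /c mulmxA HB mul1mx.
  have : row p (M *m c) = row p y by rewrite HM.
  rewrite row_mul rowM /lin_val => ->.
  by rewrite !mxE.
apply: (Hface s) => //; right; exists c.
apply/setP => t; rewrite !inE; apply/idP/idP.
  move=> Ht; have Hts : t \in s := subsetP HS' t Ht.
  rewrite Hts /=; apply/forallP => z; apply/implyP => Hz.
  rewrite Hval // Hval // Ht; by case: (z \in S').
case/andP => Hts /forallP /(_ t0) /implyP.
rewrite (subsetP HS' t0 Ht0) => /(_ isT).
rewrite Hval // Hval ?(subsetP HS' t0 Ht0) // Ht0.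
by case: (t \in S') => //; rewrite ler10.
Qed.


Definition comb (s : seq (R * T)) (t : T) : R := \sum_(p <- s) p.1 * (t == p.2)%:R.

Lemma sum_dl (h : T -> R) x : \sum_t h t * (t == x)%:R = h x.
Proof.
rewrite (bigD1 x) //= eqxx mulr1 big1 ?addr0 // => t /negbTE ->; by rewrite mulr0.
Qed.

Lemma comb_sumh (s : seq (R*T)) (h : T -> R) :
  \sum_t comb s t * h t = \sum_(p <- s) p.1 * h p.2.
Proof.
under eq_bigr => t _ do rewrite /comb mulr_suml.
rewrite exchange_big /=; apply: eq_bigr => p _.
under eq_bigr => t _ do rewrite mulrAC.
by rewrite sum_dl.
Qed.

Lemma comb_sum (s : seq (R*T)) : \sum_t comb s t = \sum_(p <- s) p.1.
Proof.
have := comb_sumh s (fun _ => 1).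
under eq_bigr => t _ do rewrite mulr1.
by under [in RHS]eq_bigr => t _ do rewrite mulr1.
Qed.

Lemma comb_vec (s : seq (R*T)) :
  \sum_t comb s t *: pt t = \sum_(p <- s) p.1 *: pt p.2.
Proof.
under eq_bigr => t _ do rewrite /comb scaler_suml.
rewrite exchange_big /=; apply: eq_bigr => p _.
rewrite (bigD1 p.2) //= eqxx mulr1 big1 ?addr0 // => t /negbTE ->.
by rewrite mulr0 scale0r.
Qed.

Lemma comb_ge (s : seq (R*T)) t : (forall p, p \in s -> 0 <= p.1) -> 0 <= comb s t.
Proof.
move=> H; rewrite /comb big_seq; apply: sumr_ge0 => p Hp.
by apply: mulr_ge0; [exact: H|exact: ler0n].
Qed.

Lemma comb_lb (s : seq (R*T)) c t : (forall p, p \in s -> 0 <= p.1) ->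
  (c, t) \in s -> c <= comb s t.
Proof.
move=> H; rewrite /comb; elim: s H => [//|p s IH] H.
rewrite inE big_cons => /orP[/eqP <-|Hin] /=.
  rewrite eqxx mulr1 lerDl big_seq; apply: sumr_ge0 => q Hq.
  by apply: mulr_ge0; [apply: H; rewrite inE Hq orbT|exact: ler0n].
have -> : c = 0 + c by rewrite add0r.
apply: lerD; first by apply: mulr_ge0; [apply: H; rewrite inE eqxx|exact: ler0n].
by apply: IH => // q Hq; apply: H; rewrite inE Hq orbT.
Qed.

Lemma comb_zero (s : seq (R*T)) (S : {set T}) t :
  (forall p, p \in s -> p.2 \in S) -> t \notin S -> comb s t = 0.
Proof.
move=> H Ht; rewrite /comb big_seq; apply: big1 => p Hp.
case: eqP => [E|_]; last by rewrite mulr0.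
by move: (H p Hp); rewrite -E (negbTE Ht).
Qed.

Lemma comb_dep (S : {set T}) (s : seq (R*T)) t :
  aff_indep pt S -> (forall p, p \in s -> p.2 \in S) ->
  \sum_(p <- s) p.1 = 0 -> \sum_(p <- s) p.1 *: pt p.2 = 0 -> comb s t = 0.
Proof.
move=> HS Hs H1 H2; apply: HS.
- by move=> x; apply: comb_zero.
- by rewrite comb_sum.
- by rewrite comb_vec.
Qed.

Lemma comb_ge' (s : seq (R*T)) t : all (fun p => 0 <= p.1) s -> 0 <= comb s t.
Proof. by move/allP => H; apply: comb_ge => p Hp; exact: H. Qed.

Lemma comb_lb' (s : seq (R*T)) c t : all (fun p => 0 <= p.1) s ->
  (c, t) \in s -> c <= comb s t.
Proof. by move/allP => H; apply: comb_lb => p Hp; exact: H. Qed.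

Lemma comb_zero' (s : seq (R*T)) (S : {set T}) t :
  all (fun p => p.2 \in S) s -> t \notin S -> comb s t = 0.
Proof. by move/allP => H; apply: comb_zero => p Hp; exact: H. Qed.

Lemma comb_dep' (S : {set T}) (s : seq (R*T)) t :
  aff_indep pt S -> all (fun p => p.2 \in S) s ->
  \sum_(p <- s) p.1 = 0 -> \sum_(p <- s) p.1 *: pt p.2 = 0 -> comb s t = 0.
Proof. move=> HS /allP H H1 H2. exact: (@comb_dep S s t HS (fun p Hp => H p Hp) H1 H2). Qed.

Lemma lemK_comb (Tr : {set {set T}}) (s s' : {set T}) (l : seq (R * T)) c t :
  is_triangulation pt Tr -> s \in Tr -> s' \in Tr ->
  all (fun p => 0 <= p.1) l -> all (fun p => p.2 \in s) l -> \sum_(p <- l) p.1 = 1 ->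
  in_conv pt s' (\sum_(p <- l) p.1 *: pt p.2) -> (c, t) \in l -> 0 < c -> t \in s'.
Proof.
move=> Htr Hs Hs' H0 Hz H1 Hc Hct Hc0.
apply: (lemK (lam := comb l) Htr Hs Hs') => //.
- by move=> x; apply: comb_ge'.
- by move=> x; apply: comb_zero'.
- by rewrite comb_sum.
- by rewrite comb_vec.
- exact: (lt_le_trans Hc0 (comb_lb' H0 Hct)).
Qed.

End Gen.

Section PA.
Variables (R : realFieldType) (F : finType).
Local Notation T := ('I_5 * F)%type.
Local Notation P := (@pointA R F).

Lemma P_row (p : T) r : (P p) 0 (lshift #|F| r) = (r == p.1)%:R.
Proof. by rewrite /pointA row_mxEl mxE. Qed.

Lemma P_col (p : T) g : (P p) 0 (rshift 5 (enum_rank g)) = (g == p.2)%:R.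
Proof. by rewrite /pointA row_mxEr mxE (inj_eq enum_rank_inj). Qed.

Definition c1P : 'cV[R]_(5 + #|F|) := col_mx (const_mx 1) 0.

Lemma lin_c1P (t : T) : lin_val P c1P t = 1.
Proof.
rewrite /lin_val /c1P /pointA mul_row_col mulmx0 addr0 mxE.
under eq_bigr => k _ do rewrite !mxE mulr1.
rewrite (bigD1 t.1) //= eqxx big1 ?addr0 // => k /negbTE -> //.
Qed.

Lemma P_square r r' g g' : P (r, g) + P (r', g') = P (r, g') + P (r', g).
Proof.
by rewrite /pointA !add_row_mx [X in row_mx _ X]addrC.
Qed.

Definition rs (lam : T -> R) r := \sum_t lam t * (t.1 == r)%:R.
Definition cs (lam : T -> R) g := \sum_t lam t * (t.2 == g)%:R.

Lemma same_rs (lam mu : T -> R) r :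
  \sum_t lam t *: P t = \sum_t mu t *: P t -> rs lam r = rs mu r.
Proof.
move=> E; have := congr1 (fun x : 'rV[R]_(5 + #|F|) => x 0 (lshift #|F| r)) E => /=; rewrite !summxE /rs.
under eq_bigr => t _ do rewrite mxE P_row eq_sym.
by under [in X in _ = X -> _]eq_bigr => t _ do rewrite mxE P_row eq_sym.
Qed.

Lemma same_cs (lam mu : T -> R) g :
  \sum_t lam t *: P t = \sum_t mu t *: P t -> cs lam g = cs mu g.
Proof.
move=> E; have := congr1 (fun x : 'rV[R]_(5 + #|F|) => x 0 (rshift 5 (enum_rank g))) E => /=; rewrite !summxE /cs.
under eq_bigr => t _ do rewrite mxE P_col eq_sym.
by under [in X in _ = X -> _]eq_bigr => t _ do rewrite mxE P_col eq_sym.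
Qed.

Lemma le_rs (lam : T -> R) r g : (forall t, 0 <= lam t) -> lam (r, g) <= rs lam r.
Proof.
move=> H; rewrite /rs -(sum_dl lam (r, g)); apply: ler_sum => [[r' g']] _.
case: eqP => [[-> ->]|_]; first by rewrite /= eqxx.
by rewrite mulr0 mulr_ge0.
Qed.

Lemma cs_le (lam : T -> R) i j g : i != j -> (forall t, 0 <= lam t) ->
  cs lam g <= lam (i, g) + lam (j, g) + (\sum_t lam t - rs lam i - rs lam j).
Proof.
move=> Hij H; rewrite /cs /rs -(sum_dl lam (i, g)) -(sum_dl lam (j, g)) -!sumrB -!big_split /=.
apply: ler_sum => [[r h]] _ /=; rewrite !xpair_eqE.
have Hl := H (r, h).
case: (r =P i) => [->|Hri]; case: (r =P j) => [Erj|Hrj]; case: (h =P g) => [->|Hhg] /=;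
  rewrite ?eqxx /=; try (by move: Hij; rewrite Erj eqxx); rewrite ?mulr1 ?mulr0 ?(negbTE Hij) ?andbF ?andbT ?mulr0 ?mulr1;
  rewrite ?(negbTE Hij) ?andbF ?andbT ?mulr0 ?mulr1; try lra.
Qed.

End PA.

From Stdlib Require Import Classical.

Section Lim.
Variables (R : realFieldType) (T : finType) (d : nat) (pt : T -> 'rV[R]_d).

Lemma fin_delta (A : eqType) (s : seq A) (Pd : A -> R -> Prop) :
  (forall x δ δ', 0 < δ' <= δ -> Pd x δ -> Pd x δ') ->
  (forall x, x \in s -> exists2 δ, 0 < δ & Pd x δ) ->
  exists2 δ, 0 < δ & forall x, x \in s -> Pd x δ.
Proof.
move=> Hmon; elim: s => [_|y s IH H]; first by exists 1 => //.
have [δ1 H1 Hy] := H y (mem_head _ _).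
have [δ2 H2 Hs] := IH (fun x Hx => H x (@mem_behead _ (y :: s) x Hx)).
exists (Num.min δ1 δ2); first by rewrite lt_min H1 H2.
have Hm : 0 < Num.min δ1 δ2 by rewrite lt_min H1 H2.
move=> x; rewrite inE => /orP[/eqP ->|Hx].
  apply: (Hmon y δ1 _ _ Hy); by rewrite Hm /= ge_min lexx.
apply: (Hmon x δ2 _ _ (Hs x Hx)); by rewrite Hm /= ge_min lexx orbT.
Qed.

Lemma limit_simplex (Tr : {set {set T}}) (Q0 Qd : 'rV[R]_d) :
  is_triangulation pt Tr ->
  (forall e, 0 <= e <= 1 -> in_conv pt [set: T] (Q0 + e *: Qd)) ->
  exists2 tau, tau \in Tr &
    in_conv pt tau Q0 /\
    forall δ, 0 < δ -> exists e, [/\ 0 < e, e < δ & in_conv pt tau (Q0 + e *: Qd)].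
Proof.
move=> Htr Hcov; have [Hind _ _ Hcv] := Htr.
pose Q e := Q0 + e *: Qd.
have [tau Htau Hgood] : exists2 tau, tau \in Tr & forall δ, 0 < δ ->
    exists e, [/\ 0 < e, e < δ & in_conv pt tau (Q e)].
  apply: NNPP => Hn.
  have H : forall x, x \in enum Tr -> exists2 δ, 0 < δ &
      forall e, 0 < e -> e < δ -> ~ in_conv pt x (Q e).
    move=> x; rewrite mem_enum => Hx; apply: NNPP => Hn2; apply: Hn.
    exists x => // δ Hδ; apply: NNPP => Hn3; apply: Hn2; exists δ => // e He1 He2 Hc.
    by apply: Hn3; exists e.
  have Hmon : forall x δ δ', 0 < δ' <= δ ->
      (forall e, 0 < e -> e < δ -> ~ in_conv pt x (Q e)) ->
      (forall e, 0 < e -> e < δ' -> ~ in_conv pt x (Q e)).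
    move=> x δ1 δ' /andP[H1 H2] Hx e He1 He2; apply: Hx => //; exact: lt_le_trans H2.
  have [δ Hδ Hall] := fin_delta Hmon H.
  pose e := Num.min δ 1 / 2.
  have He0 : 0 < e by rewrite divr_gt0 // lt_min Hδ ltr01.
  have Hemin : e < Num.min δ 1 by rewrite /e ltr_pdivrMr // ltr_pMr ?ltr1n // lt_min Hδ ltr01.
  have He01 : 0 <= e <= 1.
    have Hm1 : Num.min δ 1 <= 1 by rewrite ge_min lexx orbT.
    by apply/andP; split; [exact: ltW|apply: ltW; exact: (lt_le_trans Hemin Hm1)].
  have [x Hx Hcx] := proj2 (Hcv (Q e)) (Hcov e He01).
  apply: (Hall x _ e He0) => //; first by rewrite mem_enum.
  have Hm2 : Num.min δ 1 <= δ by rewrite ge_min lexx.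
  exact: (lt_le_trans Hemin Hm2).
exists tau => //; split => //.
have [e1 [He1 He1' [l1 [Hl10 Hl1z Hl11 Hl1x]]]] := Hgood 1 ltr01.
have [e2 [He2 He2' [l2 [Hl20 Hl2z Hl21 Hl2x]]]] := Hgood e1 He1.
have Hd : 0 < e1 - e2 by rewrite subr_gt0.
pose L e t := l2 t + (e - e2) / (e1 - e2) * (l1 t - l2 t).
have LS : forall e, \sum_t L e t = 1.
  move=> e; rewrite /L big_split /= -mulr_sumr sumrB Hl11 Hl21 subrr mulr0 addr0 //.
have LV : forall e, \sum_t L e t *: pt t = Q e.
  move=> e; rewrite /L.
  under eq_bigr => t _ do rewrite scalerDl -scalerA scalerBl.
  rewrite big_split /= -scaler_sumr sumrB -Hl1x -Hl2x /Q.
  rewrite opprD addrACA subrr add0r -scalerBl scalerA -addrA -scalerDl.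
  congr (_ + _ *: _); by field; rewrite lt0r_neq0.
have Lz : forall e t, t \notin tau -> L e t = 0.
  by move=> e t Ht; rewrite /L Hl1z // Hl2z // subrr mulr0 addr0.
have L0 : forall t, 0 <= L 0 t.
  move=> t; apply: NNPP => /negP; rewrite -ltNge => Hneg.
  pose B := (l1 t - l2 t) / (e1 - e2).
  have HD : 0 < `|B| + 1 by rewrite ltr_wpDl.
  pose δ := - L 0 t / (`|B| + 1).
  have Hδ : 0 < δ by rewrite divr_gt0 // oppr_gt0.
  have [e3 [He3 He3' [l3 [Hl30 Hl3z Hl31 Hl3x]]]] := Hgood δ Hδ.
  have E3 := aff_unique (Hind tau Htau) Hl3z (Lz e3) (etrans Hl31 (esym (LS e3)))
    (etrans (esym Hl3x) (esym (LV e3))) t.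
  have HL : L e3 t = L 0 t + e3 * B.
    rewrite /L /B; field; by rewrite lt0r_neq0.
  have h1 : e3 * B <= e3 * `|B| by apply: ler_wpM2l; [exact: ltW|exact: ler_norm].
  have h2 : e3 * `|B| <= δ * `|B| by rewrite ler_wpM2r ?normr_ge0 // ltW.
  have h3 : δ * (`|B| + 1) = - L 0 t by rewrite /δ mulrVK // unitfE lt0r_neq0.
  have h4 := Hl30 t.
  rewrite E3 HL in h4.
  move: h3; rewrite mulrDr mulr1 => h3.
  lra.
exists (L 0); split => // [t Ht|]; first exact: Lz. by rewrite LV /Q scale0r addr0.
Qed.

End Lim.

Section MX.
Variables (T : finType) (a b c d : T).
Hypotheses (ab : a != b) (ac : a != c) (ad : a != d) (bc : b != c) (bd : b != d) (cd : c != d).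

Lemma tplus_mem (s : {set T}) : s \in Tplus [set a; b] [set c; d] =
  (s \subset [set a; b; c; d]) && ~~ ([set a; b] \subset s).
Proof.
have E : [set a; b] :|: [set c; d] = [set a; b; c; d] by apply/setP => x; rewrite !inE !orbA.
by rewrite /Tplus inE E.
Qed.

Lemma maxT_gen (s : {set T}) e :
  e \in [set a; b] -> s \in Tplus [set a; b] [set c; d] ->
  [set a; b; c; d] :\ e \subset s -> is_maximal_in (Tplus [set a; b] [set c; d]) s.
Proof.
move=> He Hs Hsub; split => // s' Hs' Hss'.
move: Hs Hs'; rewrite !tplus_mem => /andP[HsX HsN] /andP[HsX' HsN'].
apply/eqP; rewrite eqEsubset Hss' andbT; apply/subsetP => x Hx.
case: (x =P e) => [Exe|Hxe]; last first.
  apply: (subsetP Hsub); rewrite !inE; apply/andP; split; first by apply/eqP.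
  by move: (subsetP HsX' x Hx); rewrite !inE.
exfalso; move/negP: HsN'; apply; apply/subsetP => y Hy.
case: (y =P e) => [->|Hye]; first by rewrite -Exe.
apply: (subsetP Hss'); apply: (subsetP Hsub); rewrite !inE; apply/andP; split; first by apply/eqP.
by move: Hy; rewrite !inE => ->.
Qed.
End MX.



Ltac split_or := repeat match goal with | H : is_true (_ || _) |- _ => case/orP: H => H end.

Lemma vec6 (R : realFieldType) (n : nat) (x1 x2 x3 y1 y2 y3 z : 'rV[R]_n) :
  x1 + x2 = z + y1 -> z + x3 = y3 + y2 ->
  1 *: x1 + (1 *: x2 + (1 *: x3 + ((-1) *: y1 + ((-1) *: y2 + ((-1) *: y3 + 0))))) = 0.
Proof.
move=> E1 E2; apply/rowP => q.
move/rowP/(_ q): E1; move/rowP/(_ q): E2; rewrite !mxE => E2 E1; lra.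
Qed.

Lemma vec4 (R : realFieldType) (n : nat) (x1 x2 y1 y2 : 'rV[R]_n) :
  x1 + x2 = y2 + y1 ->
  1 *: x1 + (1 *: x2 + ((-1) *: y1 + ((-1) *: y2 + 0))) = 0.
Proof.
move=> E1; apply/rowP => q.
move/rowP/(_ q): E1; rewrite !mxE => E1; lra.
Qed.

Lemma ar_half (R : realFieldType) : (0 : R) < 1 / 2. Proof. lra. Qed.
Lemma ar_quarter (R : realFieldType) : (0 : R) < 1 / 4. Proof. lra. Qed.
Lemma ar_cov (R : realFieldType) (e : R) : 0 <= e -> e <= 1 ->
  [/\ 0 <= (1 - e) / 2, 0 <= e / 2 & 0 <= e / 8].
Proof. move=> *; split; lra. Qed.
Lemma ar_lb (R : realFieldType) (e a b : R) :
  (1 - e) / 2 + e / 2 <= a + b + (1 - ((1 - e) / 2 + e / 8) - ((1 - e) / 2 + e / 2 + e / 8)) ->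
  a <= (1 - e) / 2 + e / 8 -> e / 8 <= b.
Proof. move=> *; lra. Qed.

Lemma ar_B (R : realFieldType) (e lu lv lb : R) :
  0 < e -> e < 1 / 4 -> 0 <= lb ->
  (1 - e) / 2 <= 0 + lu + (1 - ((1 - e) / 2 + e / 8) - ((1 - e) / 2 + e / 2 + e / 8)) ->
  (1 - e) / 2 + e / 2 <= lv + lb + (1 - ((1 - e) / 2 + e / 8) - ((1 - e) / 2 + e / 2 + e / 8)) ->
  0 <= lu + (lb - e / 4) /\ 0 <= lv + (lb - e / 4).
Proof. move=> *; split; lra. Qed.

Lemma inD_neq (F : finType) (lab : F -> {set 'I_5}) f g x y x' y' z :
  inDelta lab f x y -> inDelta lab g x' y' -> z \in [set x; y] -> z \notin [set x'; y'] ->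
  (f == g) = false.
Proof.
rewrite /inDelta => /eqP Hf /eqP Hg Hz Hz'; apply/eqP => E; subst g.
by move: Hz'; rewrite -Hg Hf Hz.
Qed.

Theorem main_aux (R : realFieldType) (F : finType)
    (lab : F -> {set 'I_5}) (Hlab : forall f, #|lab f| = 2)
    (C : {set 'I_5} -> 'I_5 -> 'I_5 -> {set {set {set 'I_5 * F}}})
    (HC0 : C_members lab C) (HC1 : C_hyp1 lab C) (HC2 : C_hyp2 lab C)
    (HC3 : C_hyp3 lab C)
    (Tr : {set {set 'I_5 * F}}) (HT : in_SC lab C R Tr)
    (i j l : 'I_5) (Hijl : uniq [:: i; j; l])
    (f1 f2 : F) (Hf1 : inDelta lab f1 i j) (Hf2 : inDelta lab f2 i l) :
  ~ has_flip Tr [set (i, f1); (j, f2)] [set (j, f1); (i, f2)].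
Proof.
move=> [Hplus Hlink].
have [Htri Hsub Hii] := HT.
have [Hind _ _ _] := Htri.
move: (Hijl); rewrite /= !inE negb_or => /andP[/andP[Hij Hil] /andP[Hjl _]].
have [k [f2' [f3 [Hk Hf2' Hf3 HkC]]]] := HC3 i j l Hijl f1 Hf1.
move: Hk; rewrite !inE !negb_or => /andP[Hki /andP[Hkj Hkl]].
have Eij : (i == j) = false by apply/negbTE.
have Eji : (j == i) = false by rewrite eq_sym Eij.
have Eil : (i == l) = false by apply/negbTE.
have Eli : (l == i) = false by rewrite eq_sym Eil.
have Ejl : (j == l) = false by apply/negbTE.
have Elj : (l == j) = false by rewrite eq_sym Ejl.
have Eki : (k == i) = false by apply/negbTE.
have Eik : (i == k) = false by rewrite eq_sym Eki.
have Ekj : (k == j) = false by apply/negbTE.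
have Ejk : (j == k) = false by rewrite eq_sym Ekj.
have Ekl : (k == l) = false by apply/negbTE.
have Elk : (l == k) = false by rewrite eq_sym Ekl.
have F12 : (f1 == f2) = false by apply: (inD_neq (z := j) Hf1 Hf2); rewrite !inE ?Eji ?Ejl ?eqxx ?orbT.
have F13 : (f1 == f2') = false by apply: (inD_neq (z := i) Hf1 Hf2'); rewrite !inE ?Eij ?Eik ?eqxx.
have F14 : (f1 == f3) = false by apply: (inD_neq (z := j) Hf1 Hf3); rewrite !inE ?Ejk ?Eji ?eqxx ?orbT.
have F23 : (f2 == f2') = false by apply: (inD_neq (z := i) Hf2 Hf2'); rewrite !inE ?Eij ?Eik ?eqxx.
have F24 : (f2 == f3) = false by apply: (inD_neq (z := l) Hf2 Hf3); rewrite !inE ?Elk ?Eli ?eqxx ?orbT.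
have F34 : (f2' == f3) = false by apply: (inD_neq (z := j) Hf2' Hf3); rewrite !inE ?Ejk ?Eji ?eqxx.
have F21 : (f2 == f1) = false by rewrite eq_sym.
have F31 : (f2' == f1) = false by rewrite eq_sym.
have F41 : (f3 == f1) = false by rewrite eq_sym.
have F32 : (f2' == f2) = false by rewrite eq_sym.
have F42 : (f3 == f2) = false by rewrite eq_sym.
have F43 : (f3 == f2') = false by rewrite eq_sym.
have NE := (Eij, Eji, Eil, Eli, Ejl, Elj, Eki, Eik, Ekj, Ejk, Ekl, Elk,
   (F12, F13, F14, F23, F24, F34, F21, F31, F41, F32, F42, F43)).

pose S0 := [set: 'I_5] :\ l.
have HvS : validSij S0 i j.
  rewrite /validSij !inE Eil Ejl Eij /=.
  have := cardsD1 l [set: 'I_5]; rewrite inE cardsT card_ord => H.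
  by rewrite andbT; move: H; rewrite -/S0 add1n => -[<-].
have Hsig := Hii S0 i j HvS k f1 f2' f3 l f2.
have Hsig' : (X3 i j k f1 f2' f3 :\ (i, f1)) :|: [set (i, f2)] \in Tr.
  by apply: Hsig => //; rewrite ?inE ?Ekl ?Eki ?Ekj ?eqxx.
set sgm := (X3 i j k f1 f2' f3 :\ (i, f1)) :|: [set (i, f2)] in Hsig'.
have Hs1T : [set (j, f1); (i, f2); (j, f2)] \in Tplus [set (i, f1); (j, f2)] [set (j, f1); (i, f2)].
  rewrite tplus_mem; apply/andP; split.
    by apply/subsetP => x; rewrite !inE => H; split_or; move/eqP: H => ->; rewrite !eqxx ?orbT ?orTb.
  apply/negP => /subsetP /(_ (i, f1)); rewrite !inE !xpair_eqE ?NE ?eqxx /=.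
  by move=> H; move: (H isT).
have Hs2T : [set (i, f1); (j, f1); (i, f2)] \in Tplus [set (i, f1); (j, f2)] [set (j, f1); (i, f2)].
  rewrite tplus_mem; apply/andP; split.
    by apply/subsetP => x; rewrite !inE => H; split_or; move/eqP: H => ->; rewrite !eqxx ?orbT ?orTb.
  apply/negP => /subsetP /(_ (j, f2)); rewrite !inE !xpair_eqE ?NE ?eqxx /=.
  by move=> H; move: (H isT).
have Hm1 : is_maximal_in (Tplus [set (i, f1); (j, f2)] [set (j, f1); (i, f2)]) [set (j, f1); (i, f2); (j, f2)].
  apply: (maxT_gen (e := (i, f1))) => //; first by rewrite !inE eqxx.
  apply/subsetP => x; rewrite !inE => /andP[Hx H]; split_or; move/eqP: H => E; subst x;
    by rewrite ?eqxx ?orbT ?orTb // in Hx *.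
have Hm2 : is_maximal_in (Tplus [set (i, f1); (j, f2)] [set (j, f1); (i, f2)]) [set (i, f1); (j, f1); (i, f2)].
  apply: (maxT_gen (e := (j, f2))) => //; first by rewrite !inE eqxx orbT.
  apply/subsetP => x; rewrite !inE => /andP[Hx H]; split_or; move/eqP: H => E; subst x;
    by rewrite ?eqxx ?orbT ?orTb // in Hx *.
have Hlk := Hlink _ _ Hm1 Hm2.
have Hs1 := subsetP Hplus _ Hs1T.
have Hs2 := subsetP Hplus _ Hs2T.

have Hsig_mem : forall x, x \in [:: (j, f1); (i, f2); (j, f2'); (k, f2'); (k, f3); (i, f3)] -> x \in sgm.
  move=> x Hx; rewrite /sgm /X3 /Xplus3 /Xminus3.
  move: Hx; rewrite !inE => H; split_or; move/eqP: H => ->;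
  by rewrite ?inE ?xpair_eqE ?NE ?eqxx ?orbT ?orTb ?andbT.
pose P := @pointA R F.
pose qs (e : R) := [:: ((1 - e) / 2, (j, f1)); ((1 - e) / 2, (i, f2)); (e / 2, (j, f2));
   (e / 8, (j, f2')); (e / 8, (k, f2')); (e / 8, (k, f3)); (e / 8, (i, f3))].
pose Q0 := (1 / 2 : R) *: (P (j, f1) + P (i, f2)).
pose Qd := (- 1 / 2 : R) *: (P (j, f1) + P (i, f2)) + (1 / 2 : R) *: P (j, f2)
   + (1 / 8 : R) *: (P (j, f2') + P (k, f2') + P (k, f3) + P (i, f3)).
have Hq : forall e, Q0 + e *: Qd = \sum_t comb (qs e) t *: P t.
  move=> e; rewrite comb_vec !big_cons big_nil /= /Q0 /Qd.
  move: (P (j, f1)) (P (i, f2)) (P (j, f2)) (P (j, f2')) (P (k, f2')) (P (k, f3)) (P (i, f3)).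
  move=> x1 x2 x3 x4 x5 x6 x7.
  apply/rowP => q; rewrite !mxE; ring.
have Hqs : forall e, \sum_(p <- qs e) p.1 = 1.
  by move=> e; rewrite !big_cons big_nil /=; field.
have Hcov : forall e, 0 <= e <= 1 -> in_conv P [set: 'I_5 * F] (Q0 + e *: Qd).
  move=> e /andP[He0 He1]; exists (comb (qs e)); split.
  - move=> t; apply: comb_ge'; rewrite /qs /=.
    have [h1 h2 h3] := ar_cov He0 He1.
    by rewrite h1 h2 h3.
  - by move=> t; rewrite inE.
  - by rewrite comb_sum Hqs.
  - exact: Hq.
have [tau Htau [HQ0 Hgood]] := limit_simplex Htri Hcov.

have HQ0' : in_conv P tau (\sum_(p <- [:: ((1/2 : R), (j, f1)); ((1/2 : R), (i, f2))]) p.1 *: P p.2).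
  suff -> : \sum_(p <- [:: ((1/2 : R), (j, f1)); ((1/2 : R), (i, f2))]) p.1 *: P p.2 = Q0 by [].
  by rewrite !big_cons big_nil /= /Q0 addr0 scalerDr.
have Hm2a : all (fun p : R * ('I_5 * F) => 0 <= p.1) [:: ((1/2 : R), (j, f1)); ((1/2 : R), (i, f2))].
  have h : (0 : R) <= 1/2 by exact: ltW (ar_half R). by rewrite /= h.
have Hm2b : all (fun p : R * ('I_5 * F) => p.2 \in [set (j, f1); (i, f2); (j, f2)])
   [:: ((1/2 : R), (j, f1)); ((1/2 : R), (i, f2))].
  by rewrite /= !inE !eqxx ?orbT ?orTb.
have Hm2c : \sum_(p <- [:: ((1/2 : R), (j, f1)); ((1/2 : R), (i, f2))]) p.1 = 1.
  by rewrite !big_cons big_nil /=; field.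
have Hh : (0 : R) < 1/2 := ar_half R.
have Hu : (j, f1) \in tau.
  by apply: (lemK_comb Htri Hs1 Htau Hm2a Hm2b Hm2c HQ0' _ Hh); rewrite !inE eqxx.
have Hv : (i, f2) \in tau.
  by apply: (lemK_comb Htri Hs1 Htau Hm2a Hm2b Hm2c HQ0' _ Hh); rewrite !inE eqxx ?orbT.

have H4 : (0 : R) < 1/4 := ar_quarter R.
have [e [He0 He1 [lam [Hl0 Hlz Hl1 Hlx]]]] := Hgood (1/4) H4.
have Heq : \sum_t lam t *: P t = \sum_t comb (qs e) t *: P t by rewrite -Hlx Hq.
have Hri : rs lam i = (1 - e) / 2 + e / 8.
  rewrite (same_rs _ Heq) /rs comb_sumh /qs !big_cons big_nil /= ?NE ?eqxx /=.
  ring.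
have Hrj : rs lam j = (1 - e) / 2 + e / 2 + e / 8.
  rewrite (same_rs _ Heq) /rs comb_sumh /qs !big_cons big_nil /= ?NE ?eqxx /=.
  ring.
have Hcf1 : cs lam f1 = (1 - e) / 2.
  rewrite (same_cs _ Heq) /cs comb_sumh /qs !big_cons big_nil /= ?NE ?eqxx /=.
  ring.
have Hcf2 : cs lam f2 = (1 - e) / 2 + e / 2.
  rewrite (same_cs _ Heq) /cs comb_sumh /qs !big_cons big_nil /= ?NE ?eqxx /=.
  ring.

have Hcs2 := cs_le f2 Hij Hl0.
have Hcs1 := cs_le f1 Hij Hl0.
have Hliv := le_rs i f2 Hl0.
rewrite Hl1 Hri Hrj Hcf2 in Hcs2.
rewrite Hl1 Hri Hrj Hcf1 in Hcs1.
rewrite Hri in Hliv.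
have Hlb : e / 8 <= lam (j, f2) := ar_lb Hcs2 Hliv.
have Hb : (j, f2) \in tau.
  have h8 : 0 < e / 8 by rewrite divr_gt0.
  by apply/negPn/negP => Hn; move: (lt_le_trans h8 Hlb); rewrite Hlz // ltxx.
have Ha : (i, f1) \notin tau.
  apply/negP => Ha.
  pose l4 := [:: (1 : R, (i, f1)); (1, (j, f2)); (-1, (j, f1)); (-1, (i, f2))].
  have Hall : all (fun p : R * ('I_5 * F) => p.2 \in tau) l4 by rewrite /= Ha Hb Hu Hv.
  have Hs0 : \sum_(p <- l4) p.1 = 0 by rewrite !big_cons big_nil /=; ring.
  have Hv0 : \sum_(p <- l4) p.1 *: P p.2 = 0.
    by rewrite !big_cons big_nil /=; apply: vec4; exact: P_square.
  have := comb_dep' (i, f1) (Hind _ Htau) Hall Hs0 Hv0.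
  rewrite /comb !big_cons big_nil /= !xpair_eqE ?NE ?eqxx /=.
  move=> H; have : (1 : R) = 0 by rewrite -H; ring.
  by move/eqP; rewrite oner_eq0.

have h8 : 0 < e / 8 by rewrite divr_gt0.
pose xl := [:: ((1 - e) / 2 + e / 4, (j, f1)); ((1 - e) / 2 + e / 4, (i, f2));
    (e / 8, (j, f2')); (e / 8, (k, f2')); (e / 8, (k, f3)); (e / 8, (i, f3))].
have Hxl0 : all (fun p : R * ('I_5 * F) => 0 <= p.1) xl.
  have h1 : 0 <= (1 - e) / 2 + e / 4 by clear -He0 He1; lra.
  by rewrite /= h1 (ltW h8).
have Hxls : all (fun p : R * ('I_5 * F) => p.2 \in sgm) xl.
  apply/allP => p Hp; apply: Hsig_mem; move: Hp; rewrite !inE => H; split_or; move/eqP: H => ->;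
  by rewrite ?inE ?eqxx ?orbT ?orTb.
have Hxl1 : \sum_(p <- xl) p.1 = 1 by rewrite !big_cons big_nil /=; field.
have Hw : forall S, S \in Tr -> in_conv P S (\sum_(p <- xl) p.1 *: P p.2) ->
    [/\ (j, f2') \in S, (k, f2') \in S, (k, f3) \in S & (i, f3) \in S] /\ (j, f1) \in S.
  move=> S HS HX.
  have Hin : forall x c, (c, x) \in xl -> 0 < c -> x \in S.
    by move=> x c Hc Hc0; exact: (lemK_comb Htri Hsig' HS Hxl0 Hxls Hxl1 HX Hc Hc0).
  have h1 : 0 < (1 - e) / 2 + e / 4 by clear -He0 He1; lra.
  split; first split.
  - by apply: (Hin _ (e / 8)) => //; rewrite /xl !inE ?eqxx ?orbT ?orTb.
  - by apply: (Hin _ (e / 8)) => //; rewrite /xl !inE ?eqxx ?orbT ?orTb.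
  - by apply: (Hin _ (e / 8)) => //; rewrite /xl !inE ?eqxx ?orbT ?orTb.
  - by apply: (Hin _ (e / 8)) => //; rewrite /xl !inE ?eqxx ?orbT ?orTb.
  - by apply: (Hin _ ((1 - e) / 2 + e / 4)) => //; rewrite /xl !inE ?eqxx ?orbT ?orTb.
case: (lerP (e / 2) (lam (j, f2))) => Hcase.
- pose dl := [:: (- (e / 2), (j, f2)); (e / 4, (j, f1)); (e / 4, (i, f2))].
  have HX : in_conv P tau (\sum_(p <- xl) p.1 *: P p.2).
    exists (fun t => lam t + comb dl t); split.
    + move=> t; rewrite /comb !big_cons big_nil /=.
      case: (t =P (j, f2)) => [->|Ht].
        rewrite !xpair_eqE ?NE ?eqxx /=; clear -Hcase; lra.
      have := Hl0 t.
      by case: (t == (j, f1)); case: (t == (i, f2)); rewrite /= => Hlt; clear -He0 Hlt; lra.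
    + move=> t Ht; rewrite Hlz // (comb_zero' (S := tau)) ?addr0 //.
      by rewrite /= Hb Hu Hv.
    + by rewrite big_split /= Hl1 comb_sum !big_cons big_nil /=; field.
    + rewrite (eq_bigr (fun t => lam t *: P t + comb dl t *: P t)); last by move=> t _; rewrite scalerDl.
      rewrite big_split /= Heq !comb_vec /qs !big_cons !big_nil /=.
      move: (P (j, f1)) (P (i, f2)) (P (j, f2)) (P (j, f2')) (P (k, f2')) (P (k, f3)) (P (i, f3)).
      move=> x1 x2 x3 x4 x5 x6 x7.
      by apply/rowP => q; rewrite !mxE; ring.
  have [[Hw1 Hw2 Hw3 Hw4] _] := Hw tau Htau HX.
  pose l6 := [:: (1 : R, (i, f2)); (1, (j, f2')); (1, (k, f3)); (-1, (j, f2)); (-1, (k, f2')); (-1, (i, f3))].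
  have Hall : all (fun p : R * ('I_5 * F) => p.2 \in tau) l6 by rewrite /= Hv Hw1 Hw3 Hb Hw2 Hw4.
  have Hs0 : \sum_(p <- l6) p.1 = 0 by rewrite !big_cons big_nil /=; ring.
  have Hv0 : \sum_(p <- l6) p.1 *: P p.2 = 0.
    by rewrite !big_cons big_nil /=; apply: vec6; exact: P_square.
  have := comb_dep' (i, f2) (Hind _ Htau) Hall Hs0 Hv0.
  rewrite /comb !big_cons big_nil /= !xpair_eqE ?NE ?eqxx /=.
  move=> H; have : (1 : R) = 0 by rewrite -H; ring.
  by move/eqP; rewrite oner_eq0.

- have Hs1sub : [set (j, f1); (i, f2); (j, f2)] \subset tau.
    by apply/subsetP => x; rewrite !inE => H; split_or; move/eqP: H => ->.
  have Hl : tau :\: [set (j, f1); (i, f2); (j, f2)] \in Tr.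
    apply: (face_sub (@lin_c1P R F) Htri Htau); exact: subsetDl.
  have Hlm : tau :\: [set (j, f1); (i, f2); (j, f2)] \in link Tr [set (j, f1); (i, f2); (j, f2)].
    have EU : [set (j, f1); (i, f2); (j, f2)] :|: (tau :\: [set (j, f1); (i, f2); (j, f2)]) = tau.
      by rewrite -{2}(setID tau [set (j, f1); (i, f2); (j, f2)]) (setIidPr Hs1sub).
    rewrite /link inE Hl /= EU Htau andbT.
    by rewrite disjoints_subset; apply/subsetP => x Hx; by rewrite in_setC in_setD Hx.
  move: Hlm; rewrite Hlk /link inE => /andP[_ /andP[_ Htau']].
  set tau' := _ :|: _ in Htau'.
  have Hatau' : (i, f1) \in tau' by rewrite /tau' !inE eqxx.
  rewrite (Hlz (i, f1)) // in Hcs1.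
  have [HBu HBv] := ar_B He0 He1 (Hl0 (j, f2)) Hcs1 Hcs2.
  pose lb := lam (j, f2).
  pose dl := [:: (- lb, (j, f2)); (e / 2 - lb, (i, f1)); (lb - e / 4, (j, f1)); (lb - e / 4, (i, f2))].
  have HX : in_conv P tau' (\sum_(p <- xl) p.1 *: P p.2).
    exists (fun t => lam t + comb dl t); split.
    + move=> t; rewrite /comb !big_cons big_nil /=.
      case: (t =P (i, f1)) => [->|Ht1].
        rewrite ?xpair_eqE ?NE ?eqxx /= (Hlz (i, f1)) //; rewrite /lb; clear -Hcase; lra.
      case: (t =P (j, f2)) => [->|Ht2].
        rewrite ?xpair_eqE ?NE ?eqxx /=; rewrite /lb; clear; lra.
      case: (t =P (j, f1)) => [->|Ht3].
        rewrite ?xpair_eqE ?NE ?eqxx /=; rewrite /lb; clear -HBu; lra.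
      case: (t =P (i, f2)) => [->|Ht4].
        rewrite ?xpair_eqE ?NE ?eqxx /=; rewrite /lb; clear -HBv; lra.
      have := Hl0 t; rewrite /= => Hlt; clear -Hlt; lra.
    + move=> t Ht'.
      case: (t =P (j, f2)) => [->|Ht2].
        rewrite /comb !big_cons big_nil /= ?xpair_eqE ?NE ?eqxx /=; rewrite /lb; clear; lra.
      have Htt : t \notin tau.
        apply/negP => Htt; apply: (negP Ht'); rewrite /tau' in_setU in_setD Htt andbT.
        have [Hs|Hs] := boolP (t \in [set (j, f1); (i, f2); (j, f2)]); last by rewrite orbT.
        move: Hs; rewrite !inE => H; split_or; move/eqP: H => E; subst t;
        try (exfalso; exact: Ht2 erefl); by rewrite ?eqxx ?orbT ?orTb.
      rewrite Hlz // (comb_zero' (S := tau' :|: [set (j, f2)])) ?addr0 //.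
      by apply/allP => p; rewrite /dl !inE => H; split_or; move/eqP: H => ->; rewrite /tau' /= ?inE ?xpair_eqE ?NE ?eqxx ?orbT ?orTb ?andbT.
        by rewrite in_setU negb_or Ht' in_set1; apply/eqP.
    + by rewrite big_split /= Hl1 comb_sum !big_cons big_nil /=; field.
    + rewrite (eq_bigr (fun t => lam t *: P t + comb dl t *: P t)); last by move=> t _; rewrite scalerDl.
      rewrite big_split /= Heq !comb_vec /qs !big_cons !big_nil /=.
      have Esq : P (i, f1) = P (i, f2) + P (j, f1) - P (j, f2) by rewrite /P -P_square addrK.
      rewrite Esq.
      move: (P (j, f1)) (P (i, f2)) (P (j, f2)) (P (j, f2')) (P (k, f2')) (P (k, f3)) (P (i, f3)).
      move=> x1 x2 x3 x4 x5 x6 x7.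
      by apply/rowP => q; rewrite !mxE; field.
  have [[Hw1 Hw2 Hw3 Hw4] Hw5] := Hw tau' Htau' HX.
  pose l6 := [:: (1 : R, (i, f1)); (1, (j, f2')); (1, (k, f3)); (-1, (j, f1)); (-1, (k, f2')); (-1, (i, f3))].
  have Hall : all (fun p : R * ('I_5 * F) => p.2 \in tau') l6 by rewrite /= Hatau' Hw1 Hw3 Hw5 Hw2 Hw4.
  have Hs0 : \sum_(p <- l6) p.1 = 0 by rewrite !big_cons big_nil /=; ring.
  have Hv0 : \sum_(p <- l6) p.1 *: P p.2 = 0.
    by rewrite !big_cons big_nil /=; apply: vec6; exact: P_square.
  have := comb_dep' (i, f1) (Hind _ Htau') Hall Hs0 Hv0.
  rewrite /comb !big_cons big_nil /= !xpair_eqE ?NE ?eqxx /=.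
  move=> H; have : (1 : R) = 0 by rewrite -H; ring.
  by move/eqP; rewrite oner_eq0.
Qed.


Local Close Scope ring_scope.

Theorem proposition5p6 (R : realFieldType) (F : finType)
    (lab : F -> {set 'I_5}) (Hlab : forall f, #|lab f| = 2)
    (C : {set 'I_5} -> 'I_5 -> 'I_5 -> {set {set {set 'I_5 * F}}})
    (HC0 : C_members lab C) (HC1 : C_hyp1 lab C) (HC2 : C_hyp2 lab C)
    (HC3 : C_hyp3 lab C)
    (Tr : {set {set 'I_5 * F}}) (HT : in_SC lab C R Tr)
    (i j l : 'I_5) (Hijl : uniq [:: i; j; l])
    (f1 f2 : F) (Hf1 : inDelta lab f1 i j) (Hf2 : inDelta lab f2 i l) :
  ~ has_flip Tr [set (i, f1); (j, f2)] [set (j, f1); (i, f2)].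
Proof.
exact: (@main_aux R F lab Hlab C HC0 HC1 HC2 HC3 Tr HT i j l Hijl f1 f2 Hf1 Hf2).
Qed.
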